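(* Let $X$ be a real vector space and let $A,B\subseteq X$ be two disjoint convex sets such that $A$ is vectorially closed and relatively solid. Suppose moreover that $B\subseteq Y$ for some finite-dimensional subspace $Y$ of $X$ and that $B$ is compact in $Y$ (with its usual Euclidean topology). Then $A$ and $B$ can be strongly separated by some $f\in X'$, i.e. there is $f\in X'$ with $\sup_{a\in A}f(a)<\inf_{b\in B}f(b)$.
   Context: $X'$ is the algebraic dual of $X$. For $C\subseteq X$: $vcl(C):=\{b\in X:\ \exists x\in X \text{ such that } \forall\lambda'>0\ \exists\lambda\in[0,\lambda'] \text{ with } b+\lambda x\in C\}$; $C$ is vectorially closed if $vcl(C)=C$; $C$ is relatively solid if $icr(C)\ne\emptyset$, where $icr(C):=\{x\in C:\ \forall x'\in span(C-C)\ \exists \lambda'>0 \text{ with } x+\lambda x'\in C\ \forall\lambda\in[0,\lambda']\}$. *)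

(* Defs.v *)
From HB Require Import structures.
From mathcomp Require Import all_boot all_order all_algebra.
From mathcomp Require Import all_classical all_reals all_analysis.
Set Implicit Arguments. Unset Strict Implicit. Unset Printing Implicit Defensive.
Import Order.TTheory GRing.Theory Num.Theory.
Local Open Scope ring_scope.
Local Open Scope classical_set_scope.

Section Defs.
Variables (R : realType) (X : lmodType R).

Definition lspan (S : set X) : set X :=
  [set x | exists (n : nat) (c : 'I_n -> R) (v : 'I_n -> X),
      (forall i, S (v i)) /\ x = \sum_(i < n) c i *: v i].

Definition setdiff_mink (C : set X) : set X :=
  [set z | exists x y, C x /\ C y /\ z = x - y].

Definition vcl (C : set X) : set X :=
  [set b | exists x : X, forall l' : R, 0 < l' ->
     exists l : R, 0 <= l /\ l <= l' /\ C (b + l *: x)].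

Definition vectorially_closed (C : set X) : Prop := vcl C = C.

Definition icr (C : set X) : set X :=
  [set x | C x /\ forall x', lspan (setdiff_mink C) x' ->
     exists l' : R, 0 < l' /\ forall l : R, 0 <= l -> l <= l' -> C (x + l *: x')].

Definition relatively_solid (C : set X) : Prop := icr C !=set0.

Definition lin_indep (n : nat) (e : 'I_n -> X) : Prop :=
  forall c : 'I_n -> R, \sum_(i < n) c i *: e i = 0 -> forall i, c i = 0.

End Defs.

(* Main.v *)
Require Import Defs.
From HB Require Import structures.
From mathcomp Require Import all_boot all_order all_algebra.
From mathcomp Require Import all_classical all_reals all_analysis.
From mathcomp Require Import ring lra.
Set Implicit Arguments. Unset Strict Implicit. Unset Printing Implicit Defensive.
Import Order.TTheory GRing.Theory Num.Theory.
Import numFieldNormedType.Exports.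
Local Open Scope ring_scope.
Local Open Scope classical_set_scope.

Section HBsec.
Variables (R : realType) (X : lmodType R).

Definition linf (f : X -> R) := forall a x y, f (a *: x + y) = a * f x + f y.
Definition subsp (L : set X) :=
  [/\ L 0, (forall x y, L x -> L y -> L (x + y)) & (forall a x, L x -> L (a *: x))].
Definition sublin (L : set X) (p : X -> R) :=
  [/\ (forall x y, L x -> L y -> p (x + y) <= p x + p y),
      (forall s x, 0 < s -> L x -> p (s *: x) = s * p x) &
      (forall x, L x -> 0 <= p x)].

Variables (L : set X) (p : X -> R) (v : X) (al : R).
Hypothesis (hL : subsp L) (hp : sublin L p)
  (hline : forall t, L (t *: v) -> t * al <= p (t *: v)).

Definition lgraph (G : set (X * R)) :=
  [/\ forall x a b, G (x, a) -> G (x, b) -> a = b,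
      forall x y a b, G (x, a) -> G (y, b) -> G (x + y, a + b),
      forall s x a, G (x, a) -> G (s *: x, s * a),
      forall t, G (t *: v, t * al) &
      forall x a, G (x, a) -> L x -> a <= p x].

Definition G0 : set (X * R) := [set z | exists t, z = (t *: v, t * al)].

Lemma p0 : p 0 = 0.
Proof.
case: hL => L0 _ _; case: hp => _ hom _.
have := hom 2 0 (ltr0Sn _ 1) L0; rewrite scaler0 => h; lra.
Qed.

Lemma lgraphG0 : lgraph G0.
Proof.
case: hL => L0 _ _.
split.
- move=> x a b [t [-> ->]] [s [hx ->]].
  have [->|ts] := eqVneq t s; first by [].
  have : (t - s) *: v = 0 by rewrite scalerBl hx subrr.
  move/eqP; rewrite scaler_eq0 subr_eq0 (negbTE ts) /= => /eqP v0.
  have al0 : al = 0.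
    have h1 := @hline 1; have h2 := @hline (-1).
    rewrite v0 !scaler0 p0 in h1 h2.
    have := h1 L0; have := h2 L0; lra.
  by rewrite al0 !mulr0.
- move=> x y a b [t [-> ->]] [s [-> ->]]; exists (t + s).
  by rewrite scalerDl mulrDl.
- move=> s x a [t [-> ->]]; exists (s * t); by rewrite scalerA mulrA.
- by move=> t; exists t.
- by move=> x a [t [-> ->]]; apply: hline.
Qed.

Lemma lgraph_chain (F : set (set (X * R))) :
  F `<=` (fun H => lgraph (H `|` G0)) -> total_on F subset ->
  lgraph (\bigcup_(H in F) H `|` G0).
Proof.
move=> FP Ftot.
have mem2 : forall z1 z2, (\bigcup_(H in F) H `|` G0) z1 -> (\bigcup_(H in F) H `|` G0) z2 ->
   exists M, [/\ lgraph M, M z1, M z2 & M `<=` \bigcup_(H in F) H `|` G0].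
  move=> z1 z2 [[H1 FH1 h1]|g1] [[H2 FH2 h2]|g2].
  - have [s12|s21] := Ftot _ _ FH1 FH2.
    + exists (H2 `|` G0); split; [exact: FP|left; exact: s12|by left|].
      by move=> z [hz|hz]; [left; exists H2|right].
    + exists (H1 `|` G0); split; [exact: FP|by left|left; exact: s21|].
      by move=> z [hz|hz]; [left; exists H1|right].
  - exists (H1 `|` G0); split; [exact: FP|by left|by right|].
    by move=> z [hz|hz]; [left; exists H1|right].
  - exists (H2 `|` G0); split; [exact: FP|by right|by left|].
    by move=> z [hz|hz]; [left; exists H2|right].
  - exists G0; split; [exact: lgraphG0|by []|by []|by move=> z hz; right].
split.
- move=> x a b h1 h2; have [M [[fM _ _ _ _] m1 m2 _]] := mem2 _ _ h1 h2; exact: fM m1 m2.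
- move=> x y a b h1 h2; have [M [[_ aM _ _ _] m1 m2 sM]] := mem2 _ _ h1 h2; exact/sM/aM.
- move=> s x a h1; have [M [[_ _ sc _ _] m1 _ sM]] := mem2 _ _ h1 h1; exact/sM/sc.
- by move=> t; right; exists t.
- move=> x a h1; have [M [[_ _ _ _ cM] m1 _ _]] := mem2 _ _ h1 h1; exact: cM.
Qed.


Lemma lgraph_ext (M : set (X * R)) (x : X) :
  lgraph M -> ~ (exists a, M (x, a)) ->
  exists c, lgraph [set z | exists m a t, M (m, a) /\ z = (m + t *: x, a + t * c)].
Proof.
case: hL => L0 LD LZ; case: hp => psub phom ppos.
move=> [fM aM sM lM cM] nx.
have M00 : M (0, 0) by have := lM 0; rewrite scale0r mul0r.
have subM : forall m a m' a', M (m, a) -> M (m', a') -> M (m - m', a - a').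
  move=> m a m' a' h h'; have := aM _ _ _ _ h (sM (-1) _ _ h').
  by rewrite scaleN1r mulN1r.
pose Lo := [set r | exists m a, [/\ M (m, a), L (m - x) & r = a - p (m - x)]].
have ub : forall m' a', M (m', a') -> L (m' + x) -> ubound Lo (p (m' + x) - a').
  move=> m' a' h' hL' r [m [a [h hLm ->]]].
  have hs := aM _ _ _ _ h h'.
  have e : m - x + (m' + x) = m + m' by rewrite addrACA addNr addr0.
  have Ls : L (m + m') by have := LD _ _ hLm hL'; rewrite e.
  have := cM _ _ hs Ls.
  have := psub _ _ hLm hL'; rewrite e.
  lra.
pose c := if pselect (Lo !=set0) is left _ then sup Lo else 0.
have Lohs : Lo !=set0 -> c = sup Lo /\ has_sup Lo.
  move=> ne; split; first by rewrite /c; case: pselect.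
  split => //; case: ne => r [m [a [h hLm _]]].
  exists (p (- m + x) - - a); apply: ub; first by have := sM (-1) _ _ h; rewrite scaleN1r mulN1r.
  by have := LZ (-1) _ hLm; rewrite scaleN1r opprB addrC.
have key : forall m a t, M (m, a) -> L (m + t *: x) -> a + t * c <= p (m + t *: x).
  move=> m a t h hl.
  have [t0|tn0] := eqVneq t 0.
    by rewrite t0 scale0r mul0r !addr0; apply: cM; rewrite t0 scale0r addr0 in hl.
  have [tgt|tlt] := ltP 0 t.
    pose m1 := t^-1 *: m; pose a1 := t^-1 * a.
    have h1 : M (m1, a1) by exact: sM.
    have e1 : t^-1 *: (m + t *: x) = m1 + x.
      by rewrite scalerDr scalerA mulVf // scale1r.
    have hl1 : L (m1 + x) by rewrite -e1; exact: LZ.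
    have ne : Lo !=set0.
      exists (- a1 - p (- m1 - x)), (- m1), (- a1); split => //.
      by have := sM (-1) _ _ h1; rewrite scaleN1r mulN1r.
      by have := LZ (-1) _ hl1; rewrite scaleN1r opprD.
    have [-> hs] := Lohs ne.
    have := ge_sup ne (ub _ _ h1 hl1) => hle.
    have : p (m + t *: x) = t * p (m1 + x) by rewrite -phom // -e1 scalerA mulfV ?scale1r // gt_eqF.
    move=> ->.
    have : t * sup Lo <= t * (p (m1 + x) - a1) by rewrite ler_pM2l.
    rewrite mulrBr /a1 mulrA mulfV // mul1r; lra.
  have tlt0 : t < 0 by rewrite lt_neqAle tn0 tlt.
  have [s sgt tE] : exists2 s, 0 < s & t = - s by exists (-t); rewrite ?opprK ?oppr_gt0.
  subst t.
  pose m1 := s^-1 *: m; pose a1 := s^-1 * a.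
  have h1 : M (m1, a1) by exact: sM.
  have sn0 : s != 0 by rewrite gt_eqF.
  have e1 : s^-1 *: (m + - s *: x) = m1 - x.
    by rewrite scalerDr scalerA mulrN mulVf // scaleN1r.
  have hl1 : L (m1 - x) by rewrite -e1; exact: LZ.
  have ne : Lo !=set0 by exists (a1 - p (m1 - x)), m1, a1.
  have [-> hs] := Lohs ne.
  have hle : a1 - p (m1 - x) <= sup Lo by apply: sup_upper_bound => //; exists m1, a1.
  have : p (m + - s *: x) = s * p (m1 - x) by rewrite -phom // -e1 scalerA mulfV ?scale1r // gt_eqF.
  move=> ->.
  have : s * (a1 - p (m1 - x)) <= s * sup Lo by rewrite ler_pM2l.
  rewrite mulrBr /a1 mulrA mulfV // mul1r; lra.
exists c; split.
- move=> y b b' [m [a [t [h [-> ->]]]]] [m' [a' [t' [h' [e ->]]]]].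
  have [tt|tt] := eqVneq t t'.
    subst t'; move/addIr: e => mm; subst m'.
    by rewrite (fM _ _ _ h h').
  exfalso; apply: nx.
  have e2 : (t - t') *: x = m' - m.
    by rewrite scalerBl; apply: (addrI m); rewrite addrA e addrK addrC subrK.
  have ne : t - t' != 0 by rewrite subr_eq0.
  exists ((t - t')^-1 * (a' - a)).
  have -> : x = (t - t')^-1 *: (m' - m) by rewrite -e2 scalerA mulVf // scale1r.
  by apply: sM; apply: subM.
- move=> y y' b b' [m [a [t [h [-> ->]]]]] [m' [a' [t' [h' [-> ->]]]]].
  exists (m + m'), (a + a'), (t + t'); split; first exact: aM.
  by rewrite scalerDl mulrDl; congr (_, _); rewrite addrACA.
- move=> s y b [m [a [t [h [-> ->]]]]].
  exists (s *: m), (s * a), (s * t); split; first exact: sM.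
  by rewrite scalerDr mulrDr scalerA mulrA.
- move=> t; exists (t *: v), (t * al), 0; split => //.
  by rewrite scale0r mul0r !addr0.
- move=> y b [m [a [t [h [-> ->]]]]] hl; exact: key.
Qed.


Lemma HB_main : exists f, [/\ linf f, f v = al & forall x, L x -> f x <= p x].
Proof.
have [A0 [PA maxA]] := @Zorn_bigcup (X * R) (fun H => lgraph (H `|` G0)) lgraph_chain.
set M := A0 `|` G0 in PA.
have M00 : M (0, 0) by case: PA => _ _ _ lM _; have := lM 0; rewrite scale0r mul0r.
have tot : forall x, exists a, M (x, a).
  move=> x; apply: contrapT => nx.
  have [c hc] := lgraph_ext PA nx.
  set G' := [set z | _] in hc.
  have MG : M `<=` G'.
    by move=> [m a] h; exists m, a, 0; split => //; rewrite scale0r mul0r !addr0.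
  apply: (maxA G').
    split; first by move=> z h; apply: MG; left.
    move=> GA; apply: nx; exists c; left; apply: GA.
    by exists 0, 0, 1; split => //; rewrite add0r scale1r add0r mul1r.
  rewrite (setUidl (B := G0)) //.
  by move=> z h; apply: MG; right.
have [f hf] := choice tot.
case: PA => fM aM sM lM cM.
exists f; split.
- move=> a x y; apply: (fM (a *: x + y)) => //.
  by apply: aM => //; apply: sM.
- by apply: (fM v) => //; have := lM 1; rewrite scale1r mul1r.
- by move=> x hx; apply: cM.
Qed.

End HBsec.

Section Pack.
Variables (R : realType) (X : lmodType R) (f : X -> R) (hf : linf f).
Definition packf : X -> R^o := f.
Lemma packf_lin : linear packf.
Proof. by move=> a x y; rewrite /packf hf. Qed.
HB.instance Definition _ := GRing.isLinear.Build R X R^o *:%R packf packf_lin.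
Definition packL : {linear X -> R^o} := packf.
Lemma packLE x : packL x = f x. Proof. by []. Qed.
End Pack.

Section Gauge.
Variables (R : realType) (X : lmodType R).

Definition cvx (K : set X) := forall x y (l : R), 0 <= l -> l <= 1 -> K x -> K y ->
  K (l *: x + (1 - l) *: y).
Definition gauge (K : set X) (x : X) := inf [set t : R | 0 < t /\ K (t^-1 *: x)].

Variables (K L : set X).
Hypotheses (K0 : K 0) (cK : cvx K)
  (abs : forall x, L x -> exists2 e, 0 < e & K (e *: x)).

Let T x := [set t : R | 0 < t /\ K (t^-1 *: x)].

Lemma feas_up x t t' : 0 < t -> t <= t' -> K (t^-1 *: x) -> K (t'^-1 *: x).
Proof.
move=> t0 tt' h.
have t'0 : 0 < t' by apply: lt_le_trans tt'.
have := cK (l := t / t') _ _ h K0.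
rewrite scaler0 addr0 scalerA mulrAC mulfV ?gt_eqF // mul1r; apply.
  by rewrite divr_ge0 // ltW.
by rewrite ler_pdivrMr // mul1r.
Qed.

Lemma Tne x : L x -> T x !=set0.
Proof. by move=> /abs [e e0 h]; exists e^-1; split; rewrite ?invrK ?invr_gt0. Qed.

Lemma Tlb x : has_lbound (T x).
Proof. by exists 0 => t [/ltW]. Qed.

Lemma g_ge0 x : L x -> 0 <= gauge K x.
Proof. by move=> Lx; apply: lb_le_inf; [exact: Tne|move=> t [/ltW]]. Qed.

Lemma g_le x t : 0 < t -> K (t^-1 *: x) -> gauge K x <= t.
Proof. by move=> t0 h; apply: ge_inf; [exact: Tlb|split]. Qed.

Lemma g_ltK x t : L x -> gauge K x < t -> K (t^-1 *: x).
Proof.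
move=> Lx /(inf_lt (Tne Lx)) [t' [t'0 h] t't].
apply: feas_up h => //; exact: ltW.
Qed.

Lemma g_le1 x : K x -> gauge K x <= 1.
Proof. by move=> h; apply: g_le => //; rewrite invr1 scale1r. Qed.

Lemma g_lt1 x : L x -> gauge K x < 1 -> K x.
Proof. by move=> Lx /(g_ltK Lx); rewrite invr1 scale1r. Qed.

Lemma g_scale_le s x : 0 < s -> L x -> gauge K (s *: x) <= s * gauge K x.
Proof.
move=> s0 Lx; rewrite -ler_pdivrMl //.
apply: lb_le_inf; first exact: Tne.
move=> t [t0 h]; rewrite ler_pdivrMl //; apply: g_le; first exact: mulr_gt0.
by rewrite scalerA invfM mulrAC mulVf ?gt_eqF // mul1r.
Qed.

Hypothesis hL : forall a x, L x -> L (a *: x).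

Lemma g_hom s x : 0 < s -> L x -> gauge K (s *: x) = s * gauge K x.
Proof.
move=> s0 Lx; apply/eqP; rewrite eq_le g_scale_le //=.
have := g_scale_le (s := s^-1) (x := s *: x); rewrite invr_gt0 scalerA mulVf ?gt_eqF // scale1r.
move=> /(_ s0 (hL _ Lx)) => h.
by have := ler_wpM2l (ltW s0) h; rewrite mulrA mulfV ?gt_eqF // mul1r.
Qed.

Lemma g_sub x y : L x -> L y -> gauge K (x + y) <= gauge K x + gauge K y.
Proof.
move=> Lx Ly.
have key : forall t t', T x t -> T y t' -> gauge K (x + y) <= t + t'.
  move=> t t' [t0 hx] [t'0 hy]; apply: g_le; first exact: addr_gt0.
  have := cK (l := t / (t + t')) _ _ hx hy.
  have tt0 : t + t' != 0 by rewrite gt_eqF // addr_gt0.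
  rewrite !scalerA (_ : 1 - t / (t + t') = t' / (t + t')); last first.
    by apply: (mulIf tt0); rewrite mulrBl !mulfVK // mul1r addrAC subrr add0r.
  rewrite mulrAC mulfV ?gt_eqF // mul1r mulrAC mulfV ?gt_eqF // mul1r -scalerDr.
  apply; first by rewrite divr_ge0 // ltW // addr_gt0.
  by rewrite ler_pdivrMr ?addr_gt0 // mul1r lerDl ltW.
have h1 : forall t', T y t' -> gauge K (x + y) - t' <= gauge K x.
  move=> t' ht'; apply: lb_le_inf; first exact: Tne.
  by move=> t ht; rewrite lerBlDr; apply: key.
have : gauge K (x + y) - gauge K x <= gauge K y.
  apply: lb_le_inf; first exact: Tne.
  move=> t' ht'; have := h1 _ ht'; lra.
lra.
Qed.

End Gauge.

Section Generic.
Variables (R : realType) (X : lmodType R).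

Lemma line_in (L : set X) (p : X -> R) (v : X) : subsp L -> sublin L p -> L v ->
  forall t, L (t *: v) -> t * p v <= p (t *: v).
Proof.
move=> [L0 LD LZ] [ps ph pp] Lv t Ltv.
have [t0|tle] := ltP 0 t; first by rewrite ph.
have [-> | tn0] := eqVneq t 0; first by rewrite mul0r scale0r pp.
have tlt : t < 0 by rewrite lt_neqAle tn0 tle.
have -> : t *: v = (- t) *: (- v) by rewrite scaleNr scalerN opprK.
rewrite ph ?oppr_gt0 //; last by have := LZ (-1) _ Lv; rewrite scaleN1r.
have h1 := pp _ Lv.
have h2 : 0 <= p (- v) by apply: pp; have := LZ (-1) _ Lv; rewrite scaleN1r.
nra.
Qed.

Lemma line_out (L : set X) (p : X -> R) (v : X) (al : R) : subsp L -> sublin L p -> ~ L v ->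
  forall t, L (t *: v) -> t * al <= p (t *: v).
Proof.
move=> [L0 LD LZ] [ps ph pp] Lv t Ltv.
have [-> | tn0] := eqVneq t 0; first by rewrite mul0r scale0r pp.
exfalso; apply: Lv; have := LZ t^-1 _ Ltv; by rewrite scalerA mulVf // scale1r.
Qed.

Lemma lspan_subsp (S : set X) : subsp (lspan S).
Proof.
split.
- by exists 0%N, (fun _ => 0), (fun _ => 0); split; [case|rewrite big_ord0].
- move=> x y [n1 [c1 [v1 [h1 ->]]]] [n2 [c2 [v2 [h2 ->]]]].
  exists (n1 + n2)%N, (fun i => match fintype.split i with inl j => c1 j | inr j => c2 j end),
    (fun i => match fintype.split i with inl j => v1 j | inr j => v2 j end); split.
    by move=> i; case: (fintype.split i).
  rewrite big_split_ord /=; congr (_ + _); apply: eq_bigr => i _.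
    by rewrite (unsplitK (inl _ i)).
  by rewrite (unsplitK (inr _ i)).
- move=> a x [n1 [c1 [v1 [h1 ->]]]].
  exists n1, (fun i => a * c1 i), v1; split => //.
  by rewrite scaler_sumr; apply: eq_bigr => i _; rewrite scalerA.
Qed.

Lemma cvx_of_convex (A : set X) : convex_set (A : set (convex_lmodType X)) -> cvx A.
Proof.
move=> cA x y l l0 l1 hx hy.
have := cA x y (Itv01 l0 l1) (mem_set hx) (mem_set hy).
by move/set_mem.
Qed.

End Generic.

Section PointSep.
Variables (R : realType) (X : lmodType R) (A : set X) (a0 : X).
Hypotheses (cA : cvx A) (vcA : vectorially_closed A) (ia0 : icr A a0).

Definition LA := lspan (setdiff_mink A).
Definition KA := [set x | A (a0 + x)].
Definition pA := gauge KA.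

Lemma KA0 : KA 0.
Proof. by rewrite /KA /= addr0; case: ia0. Qed.

Lemma cvxKA : cvx KA.
Proof.
move=> x y l l0 l1 hx hy; rewrite /KA /=.
have := cA l0 l1 hx hy.
by rewrite !scalerDr addrACA -scalerDl addrC addrCA subrr addr0 scale1r addrC.
Qed.

Lemma absKA x : LA x -> exists2 e, 0 < e & KA (e *: x).
Proof.
move=> Lx; case: ia0 => _ /(_ x Lx) [l' [l'0 h]].
by exists l' => //; apply: h => //; exact: ltW.
Qed.

Lemma LA_sub : subsp LA.
Proof. exact: lspan_subsp. Qed.

Lemma LA_Z a x : LA x -> LA (a *: x).
Proof. by case: LA_sub => _ _; apply. Qed.

Ltac solve_g := first [exact: KA0 | exact: cvxKA | exact: absKA | exact: LA_Z | assumption].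

Lemma sublin_pA : sublin LA pA.
Proof.
split.
- by move=> x y Lx Ly; apply: (g_sub (L := LA)); solve_g.
- by move=> s x s0 Lx; apply: (g_hom (L := LA)); solve_g.
- by move=> x Lx; apply: (g_ge0 (L := LA)); solve_g.
Qed.

Lemma LA_A a : A a -> LA (a - a0).
Proof.
move=> ha; exists 1%N, (fun _ => 1), (fun _ => a - a0); split.
  by move=> _; exists a, a0; split => //; case: ia0.
by rewrite big_ord1 scale1r.
Qed.

Lemma pA_A a : A a -> pA (a - a0) <= 1.
Proof. by move=> ha; apply: g_le1; rewrite /KA /= addrC subrK. Qed.

Lemma pA_out b : ~ A b -> LA (b - a0) -> 1 < pA (b - a0).
Proof.
move=> nb Lb; rewrite ltNge; apply/negP => hle; apply: nb.
rewrite -vcA; exists (a0 - b) => l' l'0.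
have l1 : 0 < 1 + l' by rewrite addr_gt0.
exists (l' / (1 + l')); split; [|split].
- by rewrite divr_ge0 // ltW.
- by have l'0' := ltW l'0; rewrite ler_pdivrMr // mulrDr mulr1 lerDl mulr_ge0.
- have lt1 : l' / (1 + l') < 1 by rewrite ltr_pdivrMr // mul1r ltrDr.
  set l := l' / (1 + l') in lt1 *.
  have t1 : 1 < (1 - l)^-1.
    by rewrite invf_gt1 ?subr_gt0 // ltrBlDr ltrDl divr_gt0.
  have := g_ltK (K := KA) (L := LA) KA0 cvxKA absKA Lb (le_lt_trans hle t1).
  rewrite invrK /KA /= => h.
  suff -> : b + l *: (a0 - b) = a0 + (1 - l) *: (b - a0) by [].
  by rewrite scalerBl scale1r !scalerBr opprB [RHS]addrA [a0 + _]addrCA subrr addr0.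
Qed.

Lemma point_sep b : ~ A b -> exists f, [/\ linf f, 1 < f (b - a0) &
  forall x, LA x -> f x <= pA x].
Proof.
move=> nb.
have [Lb|Lb] := pselect (LA (b - a0)).
  have [f [lf fv fp]] := HB_main LA_sub sublin_pA (line_in LA_sub sublin_pA Lb).
  by exists f; split => //; rewrite fv; apply: pA_out.
have [f [lf fv fp]] := HB_main LA_sub sublin_pA (line_out 2 LA_sub sublin_pA Lb).
by exists f; split => //; rewrite fv; lra.
Qed.

End PointSep.

Section KyFan.
Variables (R : realType) (X : lmodType R) (k : nat) (Bs : set X)
  (G : 'I_k -> X -> R) (mm : 'I_k -> R) (b0 : X).
Hypotheses (cB : cvx Bs) (Bb0 : Bs b0)
  (haff : forall j x y l, G j (l *: x + (1 - l) *: y) = l * G j x + (1 - l) * G j y)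
  (hcov : forall b, Bs b -> exists j, mm j < G j b).

Let V := 'rV[R]_k.
Let g b : V := \row_j (G j b - mm j).
Let U := [set y : V | exists2 b, Bs b & forall j, g b 0 j < y 0 j].
Let one : V := const_mx 1.
Let u0 : V := g b0 + one.
Let K := [set y : V | U (u0 + y)].

Let U0 : U u0.
Proof. by exists b0 => // j; rewrite !mxE ltrDl. Qed.

Let K0 : K 0.
Proof. by rewrite /K /= addr0; exact: U0. Qed.

Let cK : cvx K.
Proof.
move=> x y l l0 l1 [bx Bx hx] [by' By hy].
exists (l *: bx + (1 - l) *: by'); first exact: cB.
move=> j; have := hx j; have := hy j; rewrite !mxE haff.
set Gx := G j bx; set Gy := G j by'; set u := G j b0 - mm j + 1.
move=> h1 h2.
have E : (u + (l * x 0 j + (1 - l) * y 0 j)) - (l * Gx + (1 - l) * Gy - mm j) =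
   l * (u + x 0 j - (Gx - mm j)) + (1 - l) * (u + y 0 j - (Gy - mm j)) by ring.
rewrite -subr_gt0 E.
have d1 : 0 < u + x 0 j - (Gx - mm j) by rewrite subr_gt0.
have d2 : 0 < u + y 0 j - (Gy - mm j) by rewrite subr_gt0.
have [->|lp] := eqVneq l 0; first by rewrite mul0r add0r subr0 mul1r.
have lg : 0 < l by rewrite lt_neqAle eq_sym lp.
have := mulr_gt0 lg d1.
have l1' : 0 <= 1 - l by rewrite subr_ge0.
have := mulr_ge0 l1' (ltW d2).
lra.
Qed.

Let absK (y : V) : exists2 e, 0 < e & K (e *: y).
Proof.
set S := \sum_(j < k) `|y 0 j|.
have S0 : 0 <= S by apply: sumr_ge0 => j _.
have S1 : 0 < 1 + S by rewrite ltr_pwDl.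
exists (1 + S)^-1; first by rewrite invr_gt0.
exists b0 => // j; rewrite !mxE.
have Sge : `|y 0 j| <= S by rewrite /S (bigD1 j) //= lerDl sumr_ge0.
have h1 : (1 + S)^-1 * `|y 0 j| < 1.
  by rewrite mulrC ltr_pdivrMr // mul1r; lra.
have h2 : -1 < (1 + S)^-1 * y 0 j.
  by apply: ltrNnormlW; rewrite normrM ger0_norm // invr_ge0 ltW.
lra.
Qed.

Lemma kyfan : exists lam : 'I_k -> R, [/\ forall j, 0 <= lam j, 0 < \sum_j lam j &
  forall b, Bs b -> \sum_j lam j * mm j <= \sum_j lam j * G j b].
Proof.
set p := gauge K.
have sT : subsp (setT : set V) by split.
have absT : forall x, setT x -> exists2 e, 0 < e & K (e *: x) by move=> x _; exact: absK.
have spl : sublin setT p.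
  split.
  - by move=> x y _ _; apply: (g_sub (L := setT)).
  - by move=> s x s0 _; apply: (g_hom (L := setT)).
  - by move=> x _; apply: (g_ge0 (L := setT)).
have [h [hh hv hp]] := HB_main sT spl (line_in sT spl (I : setT (- u0))).
have p1 : 1 <= p (- u0).
  rewrite leNgt; apply/negP => /(g_lt1 K0 cK absT I).
  rewrite /K /= subrr => -[b Bb hb].
  have [j hj] := hcov Bb; have := hb j; rewrite !mxE; lra.
set hL := packL hh.
have hE : forall y, h y = hL y by [].
have hU : forall y, U y -> h y <= 0.
  move=> y Uy; have Ky : K (y - u0) by rewrite /K /= addrC subrK.
  have e1 := hp (y - u0) I; have e2 := g_le1 Ky.
  have hN : h (- u0) = - h u0 by rewrite !hE linearN.
  have hB : h (y - u0) = h y - h u0 by rewrite !hE linearB.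
  rewrite /p in p1 hv; lra.
pose lam j := - h 'e_j.
have hsum : forall y, h y = \sum_j y 0 j * h 'e_j.
  move=> y; rewrite {1}(row_sum_delta y) hE linear_sum; apply: eq_bigr => j _.
  by rewrite linearZ.
have hu0 := hU _ U0.
have lam0 : forall j, 0 <= lam j.
  move=> j; rewrite /lam oppr_ge0 leNgt; apply/negP => hj.
  set s := (1 - h u0) / h 'e_j.
  have s0 : 0 <= s by apply: divr_ge0; [lra | exact: ltW].
  have U1 : U (u0 + s *: 'e_j).
    exists b0 => // i; rewrite !mxE.
    rewrite -addrA ltrDl; apply: ltr_pwDl => //; apply: mulr_ge0 => //.
  have := hU _ U1; rewrite hE linearD linearZ /= -!hE.
  change (h u0 + s * h 'e_j <= 0 -> False).
  have : s * h 'e_j = 1 - h u0 by rewrite /s divfK // gt_eqF.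
  lra.
have lampos : 0 < \sum_j lam j.
  rewrite lt_neqAle sumr_ge0 ?andbT //; apply/negP => /eqP/esym h0.
  have z := psumr_eq0P (fun j _ => lam0 j) h0.
  have : h (- u0) = 0.
    rewrite hsum big1 // => j _; have := z j isT; rewrite /lam => /eqP.
    by rewrite oppr_eq0 => /eqP ->; rewrite mulr0.
  lra.
exists lam; split => // b Bb.
have hone : h one = - \sum_j lam j.
  by rewrite hsum /lam -sumrN; apply: eq_bigr => j _; rewrite opprK /one mxE mul1r.
have hgb : h (g b) <= 0.
  apply/ler_addgt0Pr => eps eps0.
  have S1 : 0 < 1 + \sum_j lam j by apply: ltr_pwDl => //; exact: ltW.
  set d := eps / (1 + \sum_j lam j).
  have d0 : 0 < d by rewrite divr_gt0.
  have Ud : U (g b + d *: one) by exists b => // j; rewrite !mxE mulr1 ltrDl.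
  have := hU _ Ud; rewrite hE linearD linearZ /= -!hE hone; move=> hle.
  have hle2 : h (g b) - d * \sum_j lam j <= 0 by rewrite -mulrN; exact: hle.
  have : d * \sum_j lam j <= eps.
    by rewrite /d mulrAC ler_pdivrMr // ler_pM2l // lerDr.
  lra.
have : h (g b) = - (\sum_j lam j * G j b - \sum_j lam j * mm j).
  rewrite hsum -sumrB -sumrN; apply: eq_bigr => j _; rewrite /lam !mxE; ring.
lra.
Qed.

End KyFan.

Lemma lin_cont (R : realType) (n : nat) (w : 'I_n -> R) :
  continuous (fun c : 'rV[R]_n => \sum_(i < n) c ord0 i * w i).
Proof.
apply: continuous_big; first exact: add_continuous.
move=> i _ x; apply: (@continuousM _ _ (fun c : 'rV[R]_n => c ord0 i) (fun _ => w i)).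
  exact: coord_continuous.
exact: cst_continuous.
Qed.

Section Aux.
Variables (R : realType) (X : lmodType R).

Lemma linfB (f : X -> R) : linf f -> forall x y, f (x - y) = f x - f y.
Proof. by move=> hf x y; rewrite (_ : f _ = packL hf (x - y)) // linearB. Qed.

Lemma linfZD (f : X -> R) : linf f -> forall a x y, f (a *: x + y) = a * f x + f y.
Proof. by []. Qed.

Lemma linf_sum (f : X -> R) (hf : linf f) (N : nat) (c : 'I_N -> R) (v : 'I_N -> X) :
  f (\sum_(i < N) c i *: v i) = \sum_(i < N) c i * f (v i).
Proof.
rewrite (_ : f _ = packL hf (\sum_(i < N) c i *: v i)) // linear_sum.
by apply: eq_bigr => i _; rewrite linearZ.
Qed.

Lemma span_coord (n : nat) (e : 'I_n -> X) b :
  lspan [set x | exists i, x = e i] b -> exists c : 'rV[R]_n, b = \sum_(i < n) c ord0 i *: e i.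
Proof.
move=> [N [d [w [hw ->]]]].
have [g hg] := choice hw.
exists (\row_j \sum_(i < N | g i == j) d i).
rewrite (partition_big g xpredT) //=; apply: eq_bigr => j _.
rewrite mxE scaler_suml; apply: eq_bigr => i /eqP <-; by rewrite hg.
Qed.

End Aux.

Section Main.
Variables (R : realType) (X : lmodType R) (A B : set X) (n : nat) (e : 'I_n -> X) (a0 b0 : X).
Hypotheses (AB0 : A `&` B = set0) (cA : cvx A) (cB : cvx B) (vcA : vectorially_closed A)
  (ia0 : icr A a0) (Bsp : B `<=` lspan [set x | exists i, x = e i])
  (Bcomp : compact [set c : 'rV[R]_n | B (\sum_(i < n) c ord0 i *: e i)]) (Bb0 : B b0).

Lemma main_ne : exists f, linf f /\ exists al be, [/\ al < be,
  (forall a, A a -> f a <= al) & (forall b, B b -> be <= f b)].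
Proof.
set T := fun c : 'rV[R]_n => \sum_(i < n) c ord0 i *: e i.
have nAB : forall x, B x -> ~ A x.
  by move=> x Bx Ax; have : (A `&` B) x by []; rewrite AB0.
have hsep : forall c : 'rV[R]_n, exists F, B (T c) ->
   [/\ linf F, 1 < F (T c - a0) & forall x, LA A x -> F x <= pA A a0 x].
  move=> c; have [Bc|nBc] := pselect (B (T c)).
    by have [F hF] := point_sep cA vcA ia0 (nAB _ Bc); exists F.
  by exists (fun _ => 0).
have [Fs hFs] := choice hsep.
pose m c := (1 + Fs c (T c - a0)) / 2.
pose O c := [set c' : 'rV[R]_n | m c < Fs c (T c' - a0)].
pose Bc := [set c : 'rV[R]_n | B (T c)].
have Flin : forall c, Bc c -> forall c', Fs c (T c' - a0) = \sum_i c' ord0 i * Fs c (e i) - Fs c a0.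
  by move=> c hc c'; have [lF _ _] := hFs c hc; rewrite linfB // linf_sum.
have Oopen : forall c, Bc c -> open (O c).
  move=> c hc.
  have -> : O c = (fun c' => \sum_i c' ord0 i * Fs c (e i)) @^-1` [set y | m c + Fs c a0 < y].
    by apply/seteqP; split => c'; rewrite /O /= Flin //; lra.
  by apply: (continuousP _).1; [exact: lin_cont | exact: open_gt].
have cov : Bc `<=` cover Bc O.
  by move=> c hc; exists c => //; have [_ h1 _] := hFs c hc; rewrite /O /m /=; lra.
have := Bcomp; rewrite compact_cover => /(_ _ Bc O Oopen cov) [D' D'sub D'cov].
set s := finmap.enum_fset D'.
set k := size s.
pose cj (j : 'I_k) := nth 0 s j.
have cjD : forall j, Bc (cj j).
  move=> j; apply: set_mem; apply: D'sub; exact: mem_nth.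
pose G j x := Fs (cj j) (x - a0).
pose mm j := m (cj j).
have haff : forall j x y l, G j (l *: x + (1 - l) *: y) = l * G j x + (1 - l) * G j y.
  move=> j x y l; have [lF _ _] := hFs _ (cjD j); rewrite /G.
  have -> : l *: x + (1 - l) *: y - a0 = l *: (x - a0) + ((1 - l) *: (y - a0)).
    by rewrite !scalerBr addrACA -opprD -scalerDl [l + _]addrC subrK scale1r.
  by rewrite (_ : Fs _ _ = packL lF (l *: (x - a0) + (1 - l) *: (y - a0))) // linearD !linearZ.
have hcov : forall b, B b -> exists j, mm j < G j b.
  move=> b Bb; have [c bE] := span_coord (Bsp Bb).
  have Bcc : Bc c by rewrite /Bc /T /= -bE.
  have [d dD Od] := D'cov c Bcc.
  have dk : (index d s < k)%N by rewrite index_mem.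
  exists (Ordinal dk); rewrite /mm /G /cj /= nth_index // bE; exact: Od.
have [lam [lam0 lampos hlam]] := kyfan cB Bb0 haff hcov.
have Flj : forall j, linf (Fs (cj j)) by move=> j; have [lF _ _] := hFs _ (cjD j).
pose f x := \sum_(j < k) lam j * Fs (cj j) x.
have lf : linf f.
  move=> a x y; rewrite /f mulr_sumr -big_split; apply: eq_bigr => j _.
  by rewrite (Flj j) mulrDr mulrCA.
have fB : forall x, f (x - a0) = f x - f a0.
  move=> x; rewrite /f -sumrB; apply: eq_bigr => j _; rewrite linfB //; ring.
have mm1 : forall j, 1 < mm j.
  by move=> j; have [_ h1 _] := hFs _ (cjD j); rewrite /mm /m; lra.
have pos : 0 < \sum_j lam j * (mm j - 1).
  have ge : forall j, true -> 0 <= lam j * (mm j - 1).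
    by move=> j _; rewrite mulr_ge0 // subr_ge0 ltW.
  rewrite lt_neqAle sumr_ge0 ?andbT //; apply/negP => /eqP/esym h0.
  have z := psumr_eq0P ge h0.
  have : \sum_j lam j = 0.
    apply: big1 => j _; have /eqP := z j isT; rewrite mulf_eq0 => /orP[/eqP //|].
    by rewrite subr_eq0 gt_eqF.
  lra.
exists f; split => //; exists (f a0 + \sum_j lam j), (f a0 + \sum_j lam j * mm j); split.
- move: pos; rewrite (eq_bigr (fun j => lam j * mm j - lam j)); last by move=> j _; ring.
  rewrite sumrB; lra.
- move=> a Aa.
  have : f (a - a0) <= \sum_j lam j.
    rewrite /f; apply: ler_sum => j _; rewrite -[X in _ <= X]mulr1; apply: ler_wpM2l => //.
    have [_ _ h3] := hFs _ (cjD j).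
    exact: le_trans (h3 _ (LA_A ia0 Aa)) (pA_A a0 Aa).
  rewrite fB; lra.
- move=> b Bb; have := hlam b Bb.
  have -> : \sum_j lam j * G j b = f (b - a0) by [].
  rewrite fB; lra.
Qed.
End Main.

Unset Implicit Arguments.
Set Strict Implicit.

Theorem theorem4p3 (R : realType) (X : lmodType R) (A B : set X)
  (n : nat) (e : 'I_n -> X) :
  A `&` B = set0 ->
  convex_set (A : set (convex_lmodType X)) ->
  convex_set (B : set (convex_lmodType X)) ->
  vectorially_closed A -> relatively_solid A ->
  (* Y = span of the basis e, a finite-dimensional subspace; B ⊆ Y *)
  lin_indep e ->
  B `<=` lspan [set x | exists i, x = e i] ->
  (* B compact in Y (Euclidean topology, transported through coordinates) *)
  compact [set c : 'rV[R]_n | B (\sum_(i < n) c ord0 i *: e i)] ->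
  exists f : {linear X -> R^o},
    (ereal_sup [set ((f a : R)%:E) | a in A] <
     ereal_inf [set ((f b : R)%:E) | b in B])%E.
Proof.
move=> AB0 cA cB vcA [a0 ia0] _ Bsp Bcomp.
have cA' := cvx_of_convex cA; have cB' := cvx_of_convex cB.
have [[b0 Bb0]|nB] := pselect (exists b, B b).
- have [f [lf [al [be [albe hA hB]]]]] := main_ne AB0 cA' cB' vcA ia0 Bsp Bcomp Bb0.
  exists (packL lf).
  apply: (@le_lt_trans _ _ al%:E).
    by apply: ge_ereal_sup => _ [a Aa <-]; rewrite lee_fin; exact: hA.
  apply: (@lt_le_trans _ _ be%:E); first by rewrite lte_fin.
  by apply: le_ereal_inf_tmp => _ [b Bb <-]; rewrite lee_fin; exact: hB.
- have l0 : linf (fun _ : X => 0 : R) by move=> a x y; rewrite mulr0 addr0.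
  exists (packL l0).
  have -> : [set ((packL l0 b : R)%:E) | b in B] = set0.
    by apply/seteqP; split => // z [b Bb hb]; apply: nB; exists b.
  rewrite ereal_inf0.
  apply: (@le_lt_trans _ _ 0%:E); last exact: ltry.
  by apply: ge_ereal_sup => _ [a Aa <-].
Qed.
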